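(* Every finitely presented thin groupoid has deficiency $0$.
   Context: A small graph $G$ consists of a set of objects, a set of arrows, and domain and codomain maps. $\mathcal{L}_1\mathcal{F}_1(G)$ is the free groupoid on $G$. A small groupoidal computad $\mathfrak{g}=(G,\mathfrak{g}_2,s,t)$ is a set $\mathfrak{g}_2$ with, for each $\alpha\in\mathfrak{g}_2$, two parallel morphisms $s(\alpha),t(\alpha)$ of $\mathcal{L}_1\mathcal{F}_1(G)$. It is connected if $G$ is connected. It presents a groupoid $X$ if $X$ is isomorphic to the quotient of $\mathcal{L}_1\mathcal{F}_1(G)$ by the relations $s(\alpha)=t(\alpha)$. $\mathcal{F}_{\mathrm{Top}_1}(G)$ is the topological realization of $G$: vertices, with an interval glued per arrow. $\chi$ is the Euler characteristic with real coefficients. A groupoid $X$ is finitely presented if some small connected groupoidal computad $(G,\mathfrak{g}_2,s,t)$ with $\chi(\mathcal{F}_{\mathrm{Top}_1}(G))\in\mathbb{Z}$ and $\mathfrak{g}_2$ finite presents $X$. The deficiency of such a presentation is $1-|\mathfrak{g}_2|-\chi(\mathcal{F}_{\mathrm{Top}_1}(G))$. This equals $1-\chi$ of the $2$-complex obtained from $\mathcal{F}_{\mathrm{Top}_1}(G)$ by attaching one $2$-cell per $\alpha$ along the loop given by $s(\alpha)$ followed by $t(\alpha)$ reversed. The deficiency of a finitely presented groupoid $X$ is the maximum of the deficiencies of all such finite presentations of $X$. A groupoid is thin if it has at most one morphism between any two objects. *)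

(* Defs.v *)
From Stdlib Require Import List ZArith Relations.
Import ListNotations.
Set Implicit Arguments.
Open Scope Z_scope.

Record graph := Graph {
  gV : Type;
  gE : Type;
  gdom : gE -> gV;
  gcod : gE -> gV }.

(** Letters of the free groupoid: an arrow, traversed forwards (true)
    or backwards, i.e. as its formal inverse (false). *)
Definition letter (G : graph) := (gE G * bool)%type.
Definition lsrc (G : graph) (l : letter G) : gV G :=
  if snd l then gdom G (fst l) else gcod G (fst l).
Definition ltgt (G : graph) (l : letter G) : gV G :=
  if snd l then gcod G (fst l) else gdom G (fst l).

Fixpoint is_path (G : graph) (x : gV G) (w : list (letter G)) (y : gV G) : Prop :=
  match w with
  | [] => x = y
  | l :: w' => lsrc l = x /\ is_path (ltgt l) w' y
  end.

(** Formal morphisms x -> y of the free groupoid (before quotienting). *)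
Definition pHom (G : graph) (x y : gV G) :=
  { w : list (letter G) | is_path x w y }.

Definition reduced (G : graph) (w : list (letter G)) : Prop :=
  forall u v e b, w <> u ++ (e, b) :: (e, negb b) :: v.

Definition connected (G : graph) : Prop :=
  inhabited (gV G) /\ forall x y : gV G, exists w, is_path x w y.

Definition spanning_tree (G : graph) (T : gE G -> Prop) : Prop :=
  (forall x y : gV G, exists w, is_path x w y /\ Forall (fun l => T (fst l)) w) /\
  (forall (x : gV G) w, is_path x w x -> reduced w ->
      Forall (fun l => T (fst l)) w -> w = []).

(** Euler characteristic (real coefficients) of the realization of a
    CONNECTED graph G is the integer c: H_0 = R and H_1 has dimension the
    (finite) number k of arrows outside a spanning tree, so c = 1 - k. *)
Definition conn_euler_char (G : graph) (c : Z) : Prop :=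
  exists (T : gE G -> Prop) (l : list (gE G)),
    @spanning_tree G T /\ NoDup l /\ (forall e, ~ T e <-> In e l) /\
    c = 1 - Z.of_nat (length l).

(** * Groupoids (with hom-setoids; strict groupoids are the case heq = eq) *)
Record groupoid := Groupoid {
  gOb : Type;
  gHom : gOb -> gOb -> Type;
  gheq : forall x y, gHom x y -> gHom x y -> Prop;
  gid : forall x, gHom x x;
  (* diagrammatic composition: f : x -> y, g : y -> z gives x -> z *)
  gcomp : forall x y z, gHom x y -> gHom y z -> gHom x z;
  ginv : forall x y, gHom x y -> gHom y x;
  gheq_equiv : forall x y, equivalence _ (@gheq x y);
  gcomp_proper : forall x y z (f f' : gHom x y) (g g' : gHom y z),
      gheq f f' -> gheq g g' -> gheq (gcomp f g) (gcomp f' g');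
  ginv_proper : forall x y (f f' : gHom x y), gheq f f' -> gheq (ginv f) (ginv f');
  gcompA : forall x y z w (f : gHom x y) (g : gHom y z) (h : gHom z w),
      gheq (gcomp f (gcomp g h)) (gcomp (gcomp f g) h);
  gid_l : forall x y (f : gHom x y), gheq (gcomp (gid x) f) f;
  gid_r : forall x y (f : gHom x y), gheq (gcomp f (gid y)) f;
  ginv_l : forall x y (f : gHom x y), gheq (gcomp (ginv f) f) (gid y);
  ginv_r : forall x y (f : gHom x y), gheq (gcomp f (ginv f)) (gid x) }.

Arguments gheq {g x y} _ _ : rename.
Arguments gid g x : rename.
Arguments gcomp {g x y z} _ _ : rename.
Arguments ginv {g x y} _ : rename.

Definition thin (X : groupoid) : Prop :=
  forall x y (f g : gHom X x y), gheq f g.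

Section Presented.
Variables (G : graph) (A : Type) (s t : A -> list (letter G)).

Inductive pstep : list (letter G) -> list (letter G) -> Prop :=
  | pstep_red u v e b : pstep (u ++ (e, b) :: (e, negb b) :: v) (u ++ v)
  | pstep_rel u v a : pstep (u ++ s a ++ v) (u ++ t a ++ v).

(** Equality of morphisms x -> y in the quotient of L1F1(G) by the
    relations: the equivalence generated by elementary moves (through paths). *)
Definition pequiv (x y : gV G) : pHom G x y -> pHom G x y -> Prop :=
  clos_refl_sym_trans _ (fun p q : pHom G x y => pstep (proj1_sig p) (proj1_sig q)).

(** X is isomorphic to the presented groupoid: a bijection on objects and
    a functor that is fully faithful (bijective on hom-sets). *)
Definition presents (X : groupoid) : Prop :=
  exists (f : gV G -> gOb X)
         (F : forall x y, pHom G x y -> gHom X (f x) (f y)),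
    (forall x x', f x = f x' -> x = x') /\
    (forall o, exists x, f x = o) /\
    (forall x (r : pHom G x x), proj1_sig r = [] -> gheq (F x x r) (gid X (f x))) /\
    (forall x y z (p : pHom G x y) (q : pHom G y z) (r : pHom G x z),
        proj1_sig r = proj1_sig p ++ proj1_sig q ->
        gheq (F x z r) (gcomp (F x y p) (F y z q))) /\
    (forall x y (p q : pHom G x y), pequiv p q <-> gheq (F x y p) (F x y q)) /\
    (forall x y (h : gHom X (f x) (f y)), exists p, gheq (F x y p) h).
End Presented.

(** X has a finite presentation of deficiency d :
    a small connected groupoidal computad (G, A, s, t) with A finite and
    chi(F_Top1(G)) = c an integer, presenting X, with d = 1 - |A| - c. *)
Definition fp_deficiency (X : groupoid) (d : Z) : Prop :=
  exists (G : graph) (A : Type) (a0 a1 : A -> gV G) (s t : A -> list (letter G))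
         (lA : list A) (c : Z),
    (forall a, is_path (a0 a) (s a) (a1 a)) /\
    (forall a, is_path (a0 a) (t a) (a1 a)) /\
    connected G /\ conn_euler_char G c /\
    NoDup lA /\ (forall a, In a lA) /\
    presents s t X /\
    d = 1 - Z.of_nat (length lA) - c.

Definition finitely_presented (X : groupoid) : Prop :=
  exists d, fp_deficiency X d.

Definition deficiency (X : groupoid) (d : Z) : Prop :=
  fp_deficiency X d /\ (forall d', fp_deficiency X d' -> d' <= d).

(* Main.v *)
Require Import Defs.
From Stdlib Require Import ZArith.
From Stdlib Require Import List ZArith Relations Lia Classical ProofIrrelevance.
Import ListNotations.
Open Scope nat_scope.

Section Free.
Variable G : graph.

Lemma is_path_app x u y v z : is_path (G:=G) x u y -> is_path y v z -> is_path x (u ++ v) z.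
Proof.
  revert x. induction u as [|l u IH]; simpl; intros x H1 H2.
  - subst; auto.
  - destruct H1 as [H1 H3]. split; [auto|eapply IH; eauto].
Qed.

Lemma is_path_app_inv x u v z : is_path (G:=G) x (u ++ v) z -> exists y, is_path x u y /\ is_path y v z.
Proof.
  revert x. induction u as [|l u IH]; simpl; intros x H.
  - exists x; auto.
  - destruct H as [H1 H2]. destruct (IH _ H2) as [y [H3 H4]]. exists y; auto.
Qed.

Definition red (w w' : list (letter G)) : Prop :=
  exists u v e b, w = u ++ (e, b) :: (e, negb b) :: v /\ w' = u ++ v.
Definition redstar := clos_refl_trans _ red.

Lemma red_path x w w' y : red w w' -> is_path x w y -> is_path x w' y.
Proof.
  intros [u [v [e [b [-> ->]]]]] H.
  destruct (is_path_app_inv _ _ _ _ H) as [m [H1 H2]].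
  apply (is_path_app _ _ _ _ _ H1).
  simpl in H2. destruct H2 as [E1 [E2 H3]].
  unfold lsrc, ltgt in *; simpl in *. destruct b; simpl in *; subst; auto.
Qed.

Lemma redstar_path x w w' y : redstar w w' -> is_path x w y -> is_path x w' y.
Proof.
  intros H; revert x y; induction H; intros; eauto using red_path.
Qed.

Lemma redstar_ctx u v w w' : redstar w w' -> redstar (u ++ w ++ v) (u ++ w' ++ v).
Proof.
  intros H; induction H.
  - apply rt_step. destruct H as [u' [v' [e [b [-> ->]]]]].
    exists (u ++ u'), (v' ++ v), e, b. split; repeat rewrite <- app_assoc; simpl; auto.
  - apply rt_refl.
  - eapply rt_trans; eauto.
Qed.

Definition linv (l : letter G) : letter G := (fst l, negb (snd l)).
Definition winv (w : list (letter G)) := rev (map linv w).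

Lemma path_inv x w y : is_path x w y -> is_path y (winv w) x.
Proof.
  revert x; induction w as [|l w IH]; simpl; intros x H.
  - subst; simpl; auto.
  - destruct H as [H1 H2]. unfold winv; simpl. fold (winv w).
    apply is_path_app with (y := ltgt l); auto.
    simpl. destruct l as [e b]; unfold lsrc, ltgt in *; simpl in *; destruct b; simpl; auto.
Qed.

Lemma winv_cancel q : redstar (winv q ++ q) [].
Proof.
  induction q as [|l q IH]; simpl.
  - apply rt_refl.
  - eapply rt_trans; [|exact IH]. apply rt_step. unfold winv; simpl. fold (winv q).
    destruct l as [e b0].
    exists (winv q), q, e, (negb b0). rewrite <- app_assoc. simpl.
    rewrite Bool.negb_involutive. auto.
Qed.

Lemma reduce_exists : forall n (w : list (letter G)), length w <= n -> exists r, redstar w r /\ reduced r.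
Proof.
  induction n; intros w Hl.
  - destruct w; simpl in Hl; [|lia]. exists []. split; [apply rt_refl|].
    intros u v e b H. destruct u; discriminate.
  - destruct (classic (reduced w)) as [Hr|Hr].
    + exists w; split; auto. apply rt_refl.
    + unfold reduced in Hr.
      apply not_all_ex_not in Hr as [u Hr]. apply not_all_ex_not in Hr as [v Hr].
      apply not_all_ex_not in Hr as [e Hr]. apply not_all_ex_not in Hr as [b Hr].
      apply NNPP in Hr. subst w.
      destruct (IHn (u ++ v)) as [r [H1 H2]].
      { rewrite length_app in *; simpl in *; lia. }
      exists r; split; auto. eapply rt_trans; [|exact H1]. apply rt_step.
      exists u, v, e, b; auto.
Qed.

Section Pres.
Variables (A : Type) (s t : A -> list (letter G)).

Lemma redstar_pequiv x y w w' (hw : is_path x w y) (hw' : is_path x w' y) :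
  redstar w w' -> pequiv s t (exist _ w hw) (exist _ w' hw').
Proof.
  intros H; revert hw hw'; induction H; intros hw hw'.
  - apply rst_step; simpl. destruct H as [u [v [e [b [-> ->]]]]]. apply pstep_red.
  - rewrite (proof_irrelevance _ hw hw'). apply rst_refl.
  - assert (hm : is_path x y0 y) by (eapply redstar_path; eauto).
    eapply rst_trans; [apply (IHclos_refl_trans1 hw hm) | apply IHclos_refl_trans2].
Qed.

Lemma tree_thin :
  (forall x (w : list (letter G)), is_path x w x -> reduced w -> w = []) ->
  forall x y (p q : pHom G x y), pequiv s t p q.
Proof.
  intros Htree x y [wp hp] [wq hq].
  assert (hm : is_path x (wp ++ winv wq ++ wq) y).
  { apply is_path_app with y; auto. apply is_path_app with x; auto. apply path_inv; auto. }
  apply rst_trans with (exist (fun w => is_path x w y) _ hm).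
  - apply rst_sym. apply redstar_pequiv.
    pose proof (redstar_ctx wp [] _ _ (winv_cancel wq)) as H.
    rewrite !app_nil_r in H. exact H.
  - apply redstar_pequiv.
    assert (hl : is_path x (wp ++ winv wq) x).
    { apply is_path_app with y; auto. apply path_inv; auto. }
    destruct (reduce_exists (length (wp ++ winv wq)) (wp ++ winv wq) (le_n _)) as [r [H1 H2]].
    pose proof (redstar_path _ _ _ _ H1 hl) as hr.
    rewrite (Htree _ _ hr H2) in H1.
    pose proof (redstar_ctx [] wq _ _ H1) as H. simpl in H. rewrite <- app_assoc in H. exact H.
Qed.
End Pres.
End Free.
Section TreeGraph.
Variables (G : graph) (T : gE G -> Prop).
Definition Gt : graph := @Graph (gV G) {e : gE G | T e}
  (fun e => gdom G (proj1_sig e)) (fun e => gcod G (proj1_sig e)).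
Definition emb (l : letter Gt) : letter G := (proj1_sig (fst l), snd l).

Lemma emb_path x w y : is_path (G:=Gt) x w y <-> is_path (G:=G) x (map emb w) y.
Proof.
  revert x; induction w as [|l w IH]; intros x; simpl; [tauto|].
  destruct l as [[e he] b]; unfold lsrc, ltgt; simpl.
  specialize (IH (if b then gcod G e else gdom G e)). destruct b; simpl; tauto.
Qed.

Lemma lift_word w : Forall (fun l => T (fst l)) w -> exists w', map emb w' = w.
Proof.
  induction 1 as [|[e b] w Hx Hw [w' IH]]. - exists []; auto.
  - exists ((exist _ e Hx, b) :: w'). simpl. rewrite IH. auto.
Qed.

Lemma emb_reduced w : reduced (G:=Gt) w -> reduced (G:=G) (map emb w).
Proof.
  intros Hr u v e b H.
  apply map_eq_app in H as [u' [r [-> [Hu Hr2]]]].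
  apply map_eq_cons in Hr2 as [[e1 b1] [r2 [-> [H1 H2]]]].
  apply map_eq_cons in H2 as [[e2 b2] [v' [-> [H3 H4]]]].
  destruct e1 as [e1 h1], e2 as [e2 h2].
  unfold emb in H1, H3; simpl in *. injection H1; injection H3; intros E1 E2 E3 E4.
  subst e1 e2 b2 b1.
  rewrite (proof_irrelevance _ h1 h2) in Hr.
  apply (Hr u' v' (exist _ e h2) b). reflexivity.
Qed.

Hypothesis HT : @spanning_tree G T.

Lemma Gt_path x y : exists w, is_path (G:=Gt) x w y.
Proof.
  destruct (proj1 HT x y) as [w [H1 H2]].
  destruct (lift_word _ H2) as [w' <-]. exists w'. apply emb_path; auto.
Qed.

Lemma Gt_tree x (w : list (letter Gt)) : is_path x w x -> reduced w -> w = [].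
Proof.
  intros H1 H2. apply emb_path in H1. apply emb_reduced in H2.
  assert (map emb w = []).
  { apply (proj2 HT x); auto. clear. induction w; simpl; constructor; auto.
    destruct a as [[e he] b]; simpl; auto. }
  destruct w; auto; discriminate.
Qed.

Lemma Gt_span : @spanning_tree Gt (fun _ => True).
Proof.
  split.
  - intros x y. destruct (Gt_path x y) as [w Hw]. exists w; split; auto.
    clear. induction w; constructor; auto.
  - intros x w H1 H2 _. eapply Gt_tree; eauto.
Qed.
End TreeGraph.

Definition emptyrel (G : graph) (a : Empty_set) : list (letter G) := match a with end.

Lemma exists_zero (X : groupoid) : thin X -> finitely_presented X -> fp_deficiency X 0%Z.
Proof.
  intros Hthin [d Hd].
  destruct Hd as (G & A & a0 & a1 & s & t & lA & c & _ & _ & Hconn & Heu & _ & _ & Hp & _).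
  destruct Heu as (T & l & HT & _).
  destruct Hp as [f [F [Hinj [Hsurj [Hid [Hcomp [Hiff Hfull]]]]]]].
  exists (Gt G T), Empty_set, (fun a : Empty_set => match a return gV G with end), (fun a : Empty_set => match a return gV G with end),
    (emptyrel _), (emptyrel _), [], 1%Z.
  split; [intros []|]. split; [intros []|].
  split.
  { split; [exact (proj1 Hconn)|]. apply Gt_path; auto. }
  split.
  { exists (fun _ => True), []. split; [apply Gt_span; auto|].
    split; [constructor|]. split; [simpl; tauto|]. reflexivity. }
  split; [constructor|]. split; [intros []|].
  split; [|reflexivity].
  set (F' := fun x y (p : pHom (Gt G T) x y) =>
    F x y (exist (fun w => @is_path G x w y) (map (@emb G T) (proj1_sig p))
             (proj1 (emb_path G T x (proj1_sig p) y) (proj2_sig p)))).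
  exists f, F'. split; [auto|]. split; [auto|].
  split.
  { intros x r Hr. apply Hid. simpl. rewrite Hr. reflexivity. }
  split.
  { intros x y z p q r Hr. apply Hcomp. simpl. rewrite Hr, map_app. reflexivity. }
  split.
  { intros x y p q. split; intros _; [apply Hthin|].
    apply tree_thin. intros x0 w H1 H2. eapply Gt_tree; eauto. }
  intros x y h. destruct (Gt_path G T HT x y) as [w Hw].
  exists (exist _ w Hw). apply Hthin.
Qed.
From Stdlib Require Import ClassicalEpsilon.
From mathcomp Require Import all_boot all_algebra.
Import GRing.Theory.

Section Bound.
Local Open Scope ring_scope.
Variables (G : graph) (T : gE G -> Prop) (l : list (gE G)).
Variables (A : Type) (s t : A -> list (letter G)) (lA : list A).

Definition eqd (e e0 : gE G) : bool :=
  if excluded_middle_informative (e = e0) then true else false.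

Lemma eqdP e e0 : eqd e e0 = true <-> e = e0.
Proof. rewrite /eqd; case: excluded_middle_informative => //. Qed.

Fixpoint cnt (e0 : gE G) (w : list (letter G)) : rat :=
  match w with
  | nil => 0
  | cons x w' => (if eqd (fst x) e0 then (if snd x then 1 else -1) else 0) + cnt e0 w'
  end.

Lemma cnt_cat e0 u v : cnt e0 (u ++ v) = cnt e0 u + cnt e0 v.
Proof. elim: u => [|x u IH] /=; first by rewrite add0r. by rewrite IH addrA. Qed.

Lemma cnt_canc e0 e b v : cnt e0 ((e, b) :: (e, negb b) :: v) = cnt e0 v.
Proof.
  rewrite /= addrA. case: (eqd e e0); last by rewrite !add0r.
  by case: b => /=; rewrite ?addrN ?addNr add0r.
Qed.

Definition kk := size l.
Definition phi (w : list (letter G)) : 'rV[rat]_kk :=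
  \row_(i < kk) (match nth_error l i with Some e0 => cnt e0 w | None => 0 end).

Lemma phi_cat u v : phi (u ++ v) = phi u + phi v.
Proof.
  apply/matrixP => i j; rewrite !mxE. case: (nth_error l j) => [e0|]; last by rewrite addr0.
  by rewrite cnt_cat.
Qed.

Lemma phi_canc e b v : phi ((e, b) :: (e, negb b) :: v) = phi v.
Proof.
  apply/matrixP => i j; rewrite !mxE. case: (nth_error l j) => [e0|] //.
  by rewrite cnt_canc.
Qed.

Lemma phi_nil : phi nil = 0.
Proof. apply/matrixP => i j; rewrite !mxE. by case: (nth_error l j). Qed.

Definition vr (a : A) := phi (t a) - phi (s a).
Definition M : 'M[rat]_(size lA, kk) := \matrix_(j < size lA) nth 0 (map vr lA) j.

Lemma in_nth_vr a (L : list A) : In a L -> exists j, (j < size L)%N /\ nth 0 (map vr L) j = vr a.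
Proof.
  elim: L => [|b L IH] //= [->|H]; first by exists 0%N.
  case: (IH H) => j [H1 H2]. by exists j.+1.
Qed.

Lemma vr_sub a : In a lA -> (vr a <= M)%MS.
Proof.
  move=> /in_nth_vr [j [Hj <-]].
  have -> : nth 0 (map vr lA) j = row (Ordinal Hj) M by rewrite rowK.
  exact: row_sub.
Qed.

Hypothesis HlA : forall a, In a lA.

Lemma step_sub w w' : pstep s t w w' -> (phi w - phi w' <= M)%MS.
Proof.
  case=> [u v e b|u v a].
  - rewrite !phi_cat phi_canc subrr. exact: sub0mx.
  - rewrite !phi_cat.
    have -> : phi u + (phi (s a) + phi v) - (phi u + (phi (t a) + phi v)) = (-1) *: vr a.
      by rewrite /vr scaleN1r opprB opprD addrACA subrr add0r opprD addrACA subrr addr0.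
    apply: scalemx_sub. exact: vr_sub.
Qed.

Lemma equiv_sub x y (p q : pHom G x y) : pequiv s t p q ->
  (phi (proj1_sig p) - phi (proj1_sig q) <= M)%MS.
Proof.
  elim=> [p1 q1 H|p1|p1 q1 _ IH|p1 q1 r1 _ IH1 _ IH2].
  - exact: step_sub.
  - rewrite subrr. exact: sub0mx.
  - rewrite -opprB -scaleN1r. exact: scalemx_sub.
  - have -> : phi (proj1_sig p1) - phi (proj1_sig r1) =
       (phi (proj1_sig p1) - phi (proj1_sig q1)) + (phi (proj1_sig q1) - phi (proj1_sig r1)).
      by rewrite addrA subrK.
    exact: addmx_sub.
Qed.
End Bound.
Arguments cnt {G} e0 w. Arguments eqd {G} e e0. Arguments phi {G} l w.
Arguments M {G} l {A} s t lA. Arguments kk {G} l.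
Arguments equiv_sub {G l A s t lA} HlA {x y p q}. Arguments phi_nil {G} l. Arguments eqdP {G e e0}.

Lemma size_len (B : Type) (L : list B) : size L = length L.
Proof. by elim: L => //= x L ->. Qed.

Lemma cnt_tree (G : graph) (T : gE G -> Prop) e' w :
  Forall (fun x => T (fst x)) w -> ~ T e' -> cnt e' w = 0%R.
Proof.
  elim: w => [|[e b] w IH] //= H HT. inversion H; subst.
  rewrite IH // GRing.addr0.
  case E: (eqd e e') => //. move/eqdP: E => E. subst. by [].
Qed.

Lemma bound (X : groupoid) (G : graph) (A : Type) (s t : A -> list (letter G)) (lA : list A)
  (T : gE G -> Prop) (l : list (gE G)) :
  thin X -> spanning_tree G T -> NoDup l -> (forall e, ~ T e <-> In e l) ->
  (forall a, In a lA) -> presents s t X -> (size l <= size lA)%N.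
Proof.
  move=> Hthin HT Hnd Hl HlA [f [F [_ [_ [_ [_ [Hiff _]]]]]]].
  suff Hs : (((1%:M)%R : 'M[rat]_(kk l)) <= M l s t lA)%MS.
    have := mxrankS Hs. rewrite mxrank1 => H. apply: leq_trans H _. exact: rank_leq_row.
  apply/row_subP => i. rewrite row1.
  have : nth_error l i <> None by apply/nth_error_Some; rewrite -size_len; apply/ltP; exact: ltn_ord.
  case Ei: (nth_error l i) => [e|] // _.
  case: (proj1 HT (gcod G e) (gdom G e)) => w [Hw HwT].
  have hp : is_path (gdom G e) ((e,true)::w) (gdom G e) by split.
  have hr : @is_path G (gdom G e) nil (gdom G e) by [].
  have := equiv_sub (l:=l) HlA (proj2 (Hiff _ _ (exist (fun w0 => is_path _ w0 _) _ hp) (exist (fun w0 => is_path _ w0 _) _ hr)) (Hthin _ _ _ _)).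
  rewrite /= phi_nil GRing.subr0.
  suff -> : phi l ((e,true)::w) = ('e_i)%R by [].
  apply/matrixP => a j; rewrite !mxE (ord1 a) eqxx /=.
  have : nth_error l j <> None by apply/nth_error_Some; rewrite -size_len; apply/ltP; exact: ltn_ord.
  case Ej: (nth_error l j) => [e'|] // _.
  rewrite (@cnt_tree G T e' w HwT); last by apply/Hl; exact: nth_error_In Ej.
  rewrite GRing.addr0.
  case: (boolP (j == i)) => Hji.
  - move/eqP: Hji => Hji; subst j. rewrite Ei in Ej. case: Ej => ->.
    by have /eqdP -> : e' = e' by [].
  - case E: (eqd e e') => //. move/eqdP: E => E; subst e'.
    have : (j : nat) = (i : nat).
      apply: (proj1 (NoDup_nth_error l) Hnd); last by rewrite Ej Ei.
      rewrite -size_len. apply/ltP. exact: ltn_ord.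
    move=> /val_inj H. by rewrite H eqxx in Hji.
Qed.

Delimit Scope Z_scope with Z.

Theorem mainTheorem12 (X : groupoid) :
  thin X -> finitely_presented X -> deficiency X 0%Z.
Proof.
  move=> Hthin Hfp. split; first exact: exists_zero.
  move=> d' [G [A [a0 [a1 [s [t [lA [c Hd]]]]]]]].
  case: Hd => _ [_ [_ [[T [l [HT [Hnd [Hl Hc]]]]] [_ [HlA [Hp ->]]]]]].
  have := @bound X G A s t lA T l Hthin HT Hnd Hl HlA Hp. rewrite !size_len Hc => /leP H. lia.
Qed.
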